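(* Let $q$ be a prime power, and let $g(x)\in\mathbb{F}_q[x]$ be a monic divisor of $x^{2n}-1$ with $g(x)\neq x^{2n}-1$ and $k=\deg g$. Let $\mathscr{D}=\langle g(x)\rangle$ be the $q$-ary linear cyclic code of length $2n$ generated by $g$. Let $h(x)=(x^{2n}-1)/g(x)=h_0+h_1x+\cdots+h_{2n-k}x^{2n-k}$, $h^*(x)=\frac{1}{h_{2n-k}}x^{2n-k}h(1/x)$, and let $V_{h^*(x)}\in\mathbb{F}_q^{2n}$ be the coefficient vector of $h^*(x)$ (padded with zeros). Then the $k$ vectors $\tau(V_{h^*(x)}),\tau(\sigma(V_{h^*(x)})),\ldots,\tau(\sigma^{k-1}(V_{h^*(x)}))$ are the rows of a generator matrix of the symplectic dual code $\mathscr{D}^{\perp_s}$.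
   Context: $\sigma(v_0,\ldots,v_{2n-1})=(v_{2n-1},v_0,\ldots,v_{2n-2})$ is the cyclic shift and $\tau(v_0,\ldots,v_{2n-1})=(-v_n,\ldots,-v_{2n-1},v_0,\ldots,v_{n-1})$. The symplectic inner product on $\mathbb{F}_q^{2n}$ is $\langle u,v\rangle_s=\sum_{i=0}^{n-1}(u_iv_{n+i}-u_{n+i}v_i)$ and $\mathscr{D}^{\perp_s}=\{v:\langle u,v\rangle_s=0\ \forall u\in\mathscr{D}\}$. Vectors of $\mathbb{F}_q^{2n}$ are identified with polynomials of degree $<2n$ modulo $x^{2n}-1$. *)

(* Defs.v *)
From HB Require Import structures.
From mathcomp Require Import all_boot all_order all_algebra.
Set Implicit Arguments. Unset Strict Implicit. Unset Printing Implicit Defensive.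
Import GRing.Theory.
Local Open Scope ring_scope.

(* Vectors of F^(2n) are row vectors 'rV[F]_(n + n); coordinates
   0..n-1 are the "left" block (lshift) and n..2n-1 the "right" block (rshift). *)

(* index (j mod m) in 'I_m, given some i : 'I_m witnessing m > 0 *)
Definition mod_idx (m : nat) (i : 'I_m) (j : nat) : 'I_m :=
  Ordinal (ltn_pmod j (leq_ltn_trans (leq0n i) (ltn_ord i))).

(* cyclic shift: sigma(v_0,...,v_{m-1}) = (v_{m-1}, v_0, ..., v_{m-2}) *)
Definition cshift (F : fieldType) (m : nat) (v : 'rV[F]_m) : 'rV[F]_m :=
  \row_(i < m) v 0 (mod_idx i (i + m.-1)%N).

Definition tau (F : fieldType) (n : nat) (v : 'rV[F]_(n + n)) : 'rV[F]_(n + n) :=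
  row_mx (- rsubmx v) (lsubmx v).

Definition symp (F : fieldType) (n : nat) (u v : 'rV[F]_(n + n)) : F :=
  \sum_(i < n) (u 0 (lshift n i) * v 0 (rshift n i)
                - u 0 (rshift n i) * v 0 (lshift n i)).

Definition cyclic_code (F : fieldType) (m : nat) (g : {poly F}) : 'rV[F]_m -> Prop :=
  fun v => exists f : {poly F}, rVpoly v = (f * g) %% ('X^m - 1).

Definition symp_dual (F : fieldType) (n : nat) (D : 'rV[F]_(n + n) -> Prop)
  : 'rV[F]_(n + n) -> Prop :=
  fun v => forall u, D u -> symp u v = 0.

(* h*(x) = (1 / lead_coef h) x^(deg h) h(1/x) *)
Definition recip_monic (F : fieldType) (h : {poly F}) : {poly F} :=
  (lead_coef h)^-1 *: \poly_(i < size h) h`_((size h).-1 - i).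

(* Main.v *)
Require Import Defs.
From HB Require Import structures.
From mathcomp Require Import all_boot all_order all_algebra.
From mathcomp Require Import zify ring.
Import GRing.Theory.
Local Open Scope ring_scope.


Section S.
Context {F : fieldType}.

Definition shiftmx m (p : {poly F}) r : 'M[F]_(r, m) :=
  \matrix_(i < r) poly_rV ('X^i * p).

Lemma rVpoly_sum r (c : 'rV[F]_r) : rVpoly c = \sum_(i < r) c 0 i *: 'X^i.
Proof.
apply/polyP => t; rewrite coef_rVpoly coef_sum.
case: insubP => [i _ <-|].
  rewrite (bigD1 i) //=.
  rewrite coefZ coefXn eqxx mulr1 big1 ?addr0 // => j ji.
  rewrite coefZ coefXn; case: eqP => [/val_inj e|]; last by rewrite mulr0.
  by rewrite e eqxx in ji.
move=> tr; rewrite big1 // => j _; rewrite coefZ coefXn.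
case: eqP => [ej|]; last by rewrite mulr0.
by move: tr; rewrite ej ltn_ord.
Qed.

Lemma shiftmxE m p r (c : 'rV[F]_r) :
  c *m shiftmx m p r = poly_rV (rVpoly c * p).
Proof.
rewrite mulmx_sum_row rVpoly_sum mulr_suml linear_sum /=.
apply: eq_bigr => i _; rewrite rowK -scalerAl linearZ /=; done.
Qed.

Lemma size_rVpoly r (c : 'rV[F]_r) : (size (rVpoly c) <= r)%N.
Proof. exact: size_poly. Qed.

Lemma shiftmx_free m (p : {poly F}) r : p != 0 -> (size p + r <= m.+1)%N ->
  row_free (shiftmx m p r).
Proof.
move=> p0 hs; apply: inj_row_free => c; rewrite shiftmxE //.
move=> /(congr1 rVpoly); rewrite linear0 poly_rV_K.
  by move/eqP; rewrite mulf_eq0 (negbTE p0) orbF => /eqP/(congr1 (@poly_rV F r)); rewrite rVpolyK linear0.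
case: (eqVneq (rVpoly c) 0) => [->|c0]; first by rewrite mul0r size_poly0.
rewrite size_mul // -subn1; move: hs (size_rVpoly _ c); move: (size p) (size (rVpoly c)) => a b; lia.
Qed.

Definition Tm n : 'M[F]_(n + n) := block_mx 0 1%:M (-1%:M) 0.
Definition Tm' n : 'M[F]_(n + n) := block_mx 0 (-1%:M) 1%:M 0.

Lemma TmK n : Tm n *m Tm' n = 1%:M.
Proof.
rewrite /Tm /Tm' mulmx_block !mul0mx !mulmx0 !mul1mx !mulmxN !mulNmx mul1mx.
by rewrite !addr0 !add0r opprK scalar_mx_block.
Qed.

Lemma TmK' n : Tm' n *m Tm n = 1%:M.
Proof.
rewrite /Tm /Tm' mulmx_block !mul0mx !mulmx0 !mul1mx !mulmxN !mulNmx mul1mx.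
by rewrite !addr0 !add0r opprK scalar_mx_block.
Qed.

Lemma tauE n (v : 'rV[F]_(n + n)) : tau v = v *m Tm n.
Proof.
rewrite /tau /Tm -{3}(hsubmxK v) mul_row_block !mulmx0 mulmxN !mulmx1.
by rewrite addr0 add0r.
Qed.

Lemma sympE n (u v : 'rV[F]_(n + n)) :
  symp u v = (u *m (v *m Tm' n)^T) 0 0.
Proof.
rewrite /symp /Tm' -{3}(hsubmxK v) mul_row_block !mulmx0 mulmxN !mulmx1.
rewrite addr0 add0r mxE big_split_ord /= sumrB; congr (_ + _).
  by apply: eq_bigr => i _; rewrite !mxE (unsplitK (inl i)) mxE.
rewrite -sumrN; apply: eq_bigr => i _; rewrite !mxE (unsplitK (inr i)) !mxE.
by rewrite mulrN.
Qed.

Lemma cshift_poly m (p : {poly F}) : p`_(m.-1) = 0 ->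
  cshift (poly_rV p : 'rV[F]_m) = poly_rV ('X * p).
Proof.
move=> pm; apply/rowP => t; rewrite !mxE /= coefXM.
have m0 : (0 < m)%N by apply: leq_ltn_trans (ltn_ord t).
case: eqP => [t0|tn0].
  by rewrite t0 add0n modn_small ?pm // prednK.
congr (p`_ _); have tm := ltn_ord t.
have -> : (t + m.-1 = t.-1 + m)%N by move/eqP: tn0 => tn0; lia.
by rewrite modnDr modn_small //; lia.
Qed.

Lemma iter_cshift m (p : {poly F}) i :
  (forall j, (j < i)%N -> ('X^j * p)`_(m.-1) = 0) ->
  iter i (@cshift F m) (poly_rV p) = poly_rV ('X^i * p).
Proof.
elim: i => [|i IH] H; first by rewrite expr0 mul1r.
rewrite iterS IH; last by move=> j ji; apply: H; apply: ltnW.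
by rewrite cshift_poly ?H // exprS mulrA.
Qed.

Lemma coef_Xrecip (h : {poly F}) i t :
  ('X^i * recip_monic h)`_t =
  if (t <= i + (size h).-1)%N then (lead_coef h)^-1 * h`_(i + (size h).-1 - t) else 0.
Proof.
rewrite mulrC coefMXn /recip_monic coefZ coef_poly.
case: (ltnP t i) => ti.
  have -> : (t <= i + (size h).-1)%N by lia.
  rewrite nth_default ?mulr0 //; rewrite -subn1; move: (size h) => s; lia.
case: (eqVneq h 0) => [->|hn0].
  by rewrite lead_coef0 invr0 !mul0r; case: ifP.
have sz : (0 < size h)%N by rewrite size_poly_gt0.
rewrite -!subn1; move: sz; move: (size h) => s sz.
case: ifP => A; case: ifP => B; try lia.
  by congr (_ * h`_ _); lia.
by rewrite mulr0.
Qed.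

Lemma dot_shift (h g : {poly F}) m i j : (i + (size h).-1 < m)%N ->
  \sum_(t < m) ('X^i * recip_monic h)`_t * ('X^j * g)`_t =
  (lead_coef h)^-1 * ('X^j * (g * h))`_(i + (size h).-1).
Proof.
set e := (i + (size h).-1)%N => em.
rewrite mulrA coefM mulr_sumr.
rewrite (big_ord_widen m (fun t => (lead_coef h)^-1 * (('X^j * g)`_t * h`_(e - t)))) //.
rewrite [RHS]big_mkcond /=; apply: eq_bigr => t _.
rewrite coef_Xrecip -/e ltnS; case: ifP => _; last by rewrite mul0r.
by rewrite -mulrA [_ * h`_ _]mulrC.
Qed.

Lemma coefXnN m j e : (j < e)%N -> (e - j < m)%N ->
  ('X^j * ('X^m - 1 : {poly F}))`_e = 0.
Proof.
move=> je ejm; rewrite coefXnM ltnNge ltnW //= coefB coefXn coef1.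
have -> : (e - j == m)%N = false by apply/negbTE; rewrite neq_ltn ejm.
have -> : (e - j == 0)%N = false by apply/negbTE; rewrite -lt0n subn_gt0.
by rewrite subr0.
Qed.

Lemma cyclic_sub m (g h : {poly F}) (v : 'rV[F]_m) :
  (0 < m)%N -> h * g = 'X^m - 1 -> g != 0 ->
  cyclic_code g v <-> (v <= shiftmx m g (size h).-1)%MS.
Proof.
move=> m0 hg g0.
have szN := size_Xn_sub_1 F m0.
have h0 : h != 0 by apply/eqP => h0; move: hg; rewrite h0 mul0r => /(congr1 (fun p : {poly F} => size p)); rewrite size_poly0 szN.
have szhg : (size h + size g).-1 = m.+1 by rewrite -size_mul // hg.
have sg : (0 < size g)%N by rewrite size_poly_gt0.
have sh : (0 < size h)%N by rewrite size_poly_gt0.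
split.
  case=> f E; apply/submxP; exists (poly_rV (f %% h)).
  have sz1 : (size (f %% h)%R < size h)%N by rewrite ltn_modpN0.
  have sz2 : (size (f %% h)%R <= (size h).-1)%N by move: sz1 sh; rewrite -subn1; move: (size h) => s; lia.
  rewrite shiftmxE poly_rV_K //.
  rewrite -[v]rVpolyK E {1}(divp_eq f h) mulrDl -mulrA hg modpD modp_mull add0r.
  rewrite modp_small // szN.
  case: (eqVneq (f %% h) 0) => [->|fh0]; first by rewrite mul0r size_poly0.
  rewrite size_mul //; move: sz1 szhg sg sh; move: (size h) (size g) (size (f %% h)%R) => a b c.
  lia.
case/submxP=> c ->; rewrite shiftmxE; exists (rVpoly c).
have szc := size_rVpoly _ c.
have sz : (size (rVpoly c * g)%R <= m)%N.
  case: (eqVneq (rVpoly c) 0) => [->|c0]; first by rewrite mul0r size_poly0.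
  rewrite size_mul //; move: szc szhg sg sh; move: (size h) (size g) (size (rVpoly c)) => a b d.
  lia.
by rewrite poly_rV_K // modp_small // szN.
Qed.
End S.
Theorem lemma4p4 (F : finFieldType) (n : nat) (g : {poly F}) :
  (0 < n)%N ->
  g \is monic ->
  g %| 'X^(n + n) - 1 ->
  g != 'X^(n + n) - 1 ->
  let k := (size g).-1 in
  let h := ('X^(n + n) - 1) %/ g in
  let V : 'rV[F]_(n + n) := poly_rV (recip_monic h) in
  let M : 'M[F]_(k, n + n) := \matrix_(i < k) tau (iter i (@cshift F (n + n)) V) in
  row_free M /\
  (forall v : 'rV[F]_(n + n),
      (v <= M)%MS <-> symp_dual (@cyclic_code F (n + n)%N g) v).
Proof.
move=> n0 gmon gdiv _ k h V M.
have m0 : (0 < n + n)%N by lia.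
have g0 : g != 0 by apply: monic_neq0.
have hg : h * g = 'X^(n + n) - 1 by rewrite divpK.
have szN := size_Xn_sub_1 F m0.
have h0 : h != 0 by apply/eqP => h0; move: hg; rewrite h0 mul0r => /(congr1 (fun p : {poly F} => size p)); rewrite size_poly0 szN.
have szhg : (size h + size g).-1 = (n + n).+1 by rewrite -size_mul // hg.
have sg : (0 < size g)%N by rewrite size_poly_gt0.
have sh : (size h).-1 = (n + n - k)%N by move: szhg sg; rewrite /k -!subn1; move: (size h) (size g) => a b; lia.
have kle : (k <= n + n)%N.
  have : (0 < size h)%N by rewrite size_poly_gt0.
  by move: szhg sg; rewrite /k -!subn1; move: (size h) (size g) => a b; lia.
set hs := recip_monic h.
have hs0 : hs != 0.
  apply/eqP => /(congr1 (fun p : {poly F} => p`_0)).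
  rewrite /hs /recip_monic coefZ coef_poly size_poly_gt0 h0 subn0 coef0.
  by rewrite -lead_coefE mulVf ?lead_coef_eq0 //; apply/eqP; rewrite oner_eq0.
set M0 := shiftmx (n + n) hs k.
set G := shiftmx (n + n) g (size h).-1.
have MT : M = M0 *m Tm n.
  apply/row_matrixP => i; rewrite row_mul !rowK tauE /V iter_cshift // => j ji.
  rewrite coef_Xrecip; case: ifP => // C; exfalso; move: C (ltn_ord i); rewrite sh -subn1; lia.
have M0free : row_free M0.
  apply: shiftmx_free => //.
  have := size_scale_leq (lead_coef h)^-1 (\poly_(i < size h) h`_((size h).-1 - i)).
  have := size_poly (size h) (fun i => h`_((size h).-1 - i)).
  rewrite -/(recip_monic h) -/hs; move: sh szhg sg; rewrite /k.
  move: (size h) (size g) (size hs) => a b c; lia.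
have Tfree : row_free (Tm (F:=F) n) by apply/row_freeP; exists (Tm' n); apply: TmK.
split; first by rewrite MT /row_free mxrankMfree.
move=> v.
have orth : (M0 *m G^T = 0).
  apply/matrixP => i j; rewrite !mxE.
  under eq_bigr => t _ do rewrite !mxE.
  rewrite dot_shift; last by have := ltn_ord i; rewrite sh; lia.
  have jl : (j < n + n - k)%N by rewrite -sh ltn_ord.
  have il := ltn_ord i; rewrite [g * h]mulrC hg coefXnN ?mulr0 //; move: jl; move: (nat_of_ord j) => jj; rewrite sh; lia.
have Gfree : row_free G.
  by apply: shiftmx_free => //; move: szhg sg (size_poly_gt0 h); rewrite h0 -!subn1; move: (size h) (size g) => a b; lia.
have rk : \rank (kermx G^T) = k.
  rewrite mxrank_ker mxrank_tr; move: Gfree; rewrite /row_free => /eqP ->.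
  rewrite sh; lia.
have sub1 : (M0 <= kermx G^T)%MS by apply/sub_kermxP.
have sub2 : (kermx G^T <= M0)%MS.
  rewrite -(mxrank_leqif_sup sub1).2; move: M0free; rewrite /row_free => /eqP ->.
  by rewrite rk.
have stepa : (v <= M)%MS <-> (v *m Tm' n <= M0)%MS.
  rewrite MT; split.
    case/submxP => D ->; apply/submxP; exists D.
    by rewrite -!mulmxA TmK mulmx1.
  case/submxP => D E; apply/submxP; exists D.
  by rewrite mulmxA -E -mulmxA TmK' mulmx1.
rewrite stepa; set w := v *m Tm' n.
have stepc : (w <= M0)%MS <-> w *m G^T = 0.
  split => [H|H]; first by apply/sub_kermxP; apply: submx_trans H sub1.
  by apply: submx_trans sub2; apply/sub_kermxP.
rewrite stepc; split.
  move=> wG u /(cyclic_sub _ _ _ _ m0 hg g0) /submxP [c ->].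
  rewrite sympE -/w -mulmxA -[G *m w^T]trmxK trmx_mul trmxK wG.
  by rewrite trmx0 mulmx0 mxE.
move=> H; apply/rowP => j; rewrite !mxE.
have E := H (row j G) (proj2 (cyclic_sub _ _ _ _ m0 hg g0) (row_sub _ _)).
rewrite sympE -/w mxE in E; apply: (etrans _ E).
by apply: eq_bigr => t _; rewrite !mxE mulrC.
Qed.
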